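(* Let $\mathcal D$ be universal and let $m\in\mathcal D$ with $m>0$. Suppose the set $S=\{r\in\mathcal D: r^{+}>m+r\}$ is nonempty. Then $s:=\min S$ is a jump number, i.e. $s^{+}>2s$.
   Context: $\mathcal D$ denotes a finite subset of $\mathbb R_{\ge0}$ with $0\in\mathcal D$; it is universal if there is a countable homogeneous metric space with distance set exactly $\mathcal D$ into which every finite metric space with distances in $\mathcal D$ embeds isometrically (homogeneous: every isometry between finite subspaces extends to an isometry of the space onto itself). For $r\in\mathcal D$ with $r<\max\mathcal D$, $r^{+}$ is the smallest element of $\mathcal D$ larger than $r$; for $r=\max\mathcal D$, $r^{+}=r$. *)

(* Defs.v *)
From Stdlib Require Import Reals List.
Import ListNotations.
Open Scope R_scope.

(* A finite distance set D is represented by a list of reals. *)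

(* r^+ : the smallest element of D strictly larger than r, or r itself if
   there is none (in particular r^+ = r for r = max D). *)
Definition succ (D : list R) (r : R) : R :=
  fold_right (fun x acc =>
    if Rlt_dec r x then (if Rlt_dec r acc then Rmin x acc else x) else acc) r D.

Definition is_metric {X : Type} (d : X -> X -> R) : Prop :=
  (forall x y, d x y = 0 <-> x = y) /\
  (forall x y, d x y = d y x) /\
  (forall x y z, d x z <= d x y + d y z).

Definition countable_type (X : Type) : Prop :=
  exists f : X -> nat, forall x y, f x = f y -> x = y.

Definition distance_set_is {X : Type} (d : X -> X -> R) (D : list R) : Prop :=
  (forall x y, In (d x y) D) /\ (forall r, In r D -> exists x y, d x y = r).

(* Homogeneity: every isometry between finite subspaces (given as a finite
   list of points xs mapped pointwise to ys) extends to an isometry of X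
   onto itself. *)
Definition homogeneous {X : Type} (d : X -> X -> R) : Prop :=
  forall (xs ys : list X) (x0 : X),
    length xs = length ys ->
    (forall i j, (i < length xs)%nat -> (j < length xs)%nat ->
       d (nth i ys x0) (nth j ys x0) = d (nth i xs x0) (nth j xs x0)) ->
    exists g : X -> X,
      (forall x y, d (g x) (g y) = d x y) /\
      (forall y, exists x, g x = y) /\
      (forall i, (i < length xs)%nat -> g (nth i xs x0) = nth i ys x0).

Definition finite_metric_in (n : nat) (dY : nat -> nat -> R) (D : list R) : Prop :=
  (forall i j, (i < n)%nat -> (j < n)%nat -> (dY i j = 0 <-> i = j)) /\
  (forall i j, (i < n)%nat -> (j < n)%nat -> dY i j = dY j i) /\
  (forall i j k, (i < n)%nat -> (j < n)%nat -> (k < n)%nat ->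
     dY i k <= dY i j + dY j k) /\
  (forall i j, (i < n)%nat -> (j < n)%nat -> In (dY i j) D).

Definition universal (D : list R) : Prop :=
  exists (X : Type) (d : X -> X -> R),
    is_metric d /\ countable_type X /\ distance_set_is d D /\ homogeneous d /\
    (forall (n : nat) (dY : nat -> nat -> R), finite_metric_in n dY D ->
       exists f : nat -> X, forall i j, (i < n)%nat -> (j < n)%nat ->
         d (f i) (f j) = dY i j).

(* Main.v *)
Require Import Defs.
From Stdlib Require Import Reals List Lra Lia.
Open Scope R_scope.

Lemma succ_cons (a : R) l r : succ (a :: l) r =
  if Rlt_dec r a then (if Rlt_dec r (succ l r) then Rmin a (succ l r) else a) else succ l r.
Proof. reflexivity. Qed.

Lemma succ_spec D r :
  (succ D r = r /\ forall x, In x D -> x <= r) \/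
  (r < succ D r /\ In (succ D r) D /\ forall x, In x D -> r < x -> succ D r <= x).
Proof.
  induction D as [|a l IH].
  - left; split; [reflexivity| intros x []].
  - rewrite succ_cons.
    destruct (Rlt_dec r a) as [Ha|Ha].
    + destruct (Rlt_dec r (succ l r)) as [Hs|Hs].
      * destruct IH as [[E _]|[H1 [H2 H3]]]; [lra|].
        right. unfold Rmin; destruct (Rle_dec a (succ l r)).
        -- split; [lra|split; [left; reflexivity|]].
           intros x [<-|Hx] Hrx; [lra|]. specialize (H3 x Hx Hrx); lra.
        -- split; [lra|split; [right; assumption|]].
           intros x [<-|Hx] Hrx; [lra|]. apply H3; auto.
      * right. split; [lra|split; [left; reflexivity|]].
        intros x [<-|Hx] Hrx; [lra|].
        destruct IH as [[E H]|[H1 _]]; [specialize (H x Hx); lra|lra].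
    + destruct IH as [[E H]|[H1 [H2 H3]]].
      * left. split; [assumption|]. intros x [<-|Hx]; [lra|auto].
      * right. split; [assumption|split; [right; assumption|]].
        intros x [<-|Hx] Hrx; [lra|auto].
Qed.

Lemma succ_in D r y : In y D -> r < y -> r < succ D r /\ In (succ D r) D /\ forall x, In x D -> r < x -> succ D r <= x.
Proof.
  intros Hy Hr. destruct (succ_spec D r) as [[_ H]|H]; [specialize (H y Hy); lra|exact H].
Qed.


Lemma max_below (l : list R) (c : R) : forall y, In y l -> y < c ->
  exists x, In x l /\ x < c /\ forall y, In y l -> y < c -> y <= x.
Proof.
  induction l as [|a l IH]; intros y Hy Hc; [destruct Hy|].
  destruct Hy as [<-|Hy].
  -
    assert (H : (exists z, In z l /\ z < c) \/ ~ (exists z, In z l /\ z < c)).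
    { clear IH. induction l as [|b l IHl]; [right; intros [z [[] _]]|].
      destruct (Rlt_dec b c); [left; exists b; split; [left|]; auto|].
      destruct IHl as [[z [Hz Hzc]]|Hn]; [left; exists z; split; [right|]; auto|].
      right; intros [z [[<-|Hz] Hzc]]; [lra|apply Hn; eauto]. }
    destruct H as [[z [Hz Hzc]]|Hn].
    + destruct (IH z Hz Hzc) as [x [Hx [Hxc Hm]]].
      destruct (Rle_dec a x).
      * exists x; split; [right; auto|split; auto]. intros w [<-|Hw] Hwc; auto.
      * exists a; split; [left; auto|split; auto]. intros w [<-|Hw] Hwc; [lra|].
        specialize (Hm w Hw Hwc); lra.
    + exists a; split; [left; auto|split; auto]. intros w [<-|Hw] Hwc; [lra|].
      exfalso; apply Hn; eauto.
  - destruct (IH y Hy Hc) as [x [Hx [Hxc Hm]]].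
    destruct (Rlt_dec a c) as [Ha|Ha].
    + destruct (Rle_dec a x).
      * exists x; split; [right; auto|split; auto]. intros w [<-|Hw] Hwc; auto.
      * exists a; split; [left; auto|split; auto]. intros w [<-|Hw] Hwc; [lra|].
        specialize (Hm w Hw Hwc); lra.
    + exists x; split; [right; auto|split; auto]. intros w [<-|Hw] Hwc; [lra|auto].
Qed.

Definition tri (p q r : R) (i j : nat) : R :=
  match i, j with
  | 0%nat, 1%nat | 1%nat, 0%nat => p
  | 1%nat, 2%nat | 2%nat, 1%nat => q
  | 0%nat, 2%nat | 2%nat, 0%nat => r
  | _, _ => 0
  end.

Lemma tri_fm D p q r : In 0 D -> In p D -> In q D -> In r D ->
  0 < p -> 0 < q -> 0 < r -> p <= q + r -> q <= p + r -> r <= p + q ->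
  finite_metric_in 3 (tri p q r) D.
Proof.
  intros H0 Hp Hq Hr p0 q0 r0 t1 t2 t3.
  split; [|split; [|split]].
  - intros i j Hi Hj.
    destruct i as [|[|[|i]]]; try lia; destruct j as [|[|[|j]]]; try lia;
      simpl; split; intro; try lra; try discriminate; reflexivity.
  - intros i j Hi Hj.
    destruct i as [|[|[|i]]]; try lia; destruct j as [|[|[|j]]]; try lia; reflexivity.
  - intros i j k Hi Hj Hk.
    destruct i as [|[|[|i]]]; try lia; destruct j as [|[|[|j]]]; try lia;
      destruct k as [|[|[|k]]]; try lia; simpl; lra.
  - intros i j Hi Hj.
    destruct i as [|[|[|i]]]; try lia; destruct j as [|[|[|j]]]; try lia; simpl; auto.
Qed.

Theorem lemma3p1 (D : list R)
  (H0 : In 0 D) (Hnn : forall x, In x D -> 0 <= x)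
  (HU : universal D)
  (m : R) (Hm : In m D) (Hmpos : 0 < m)
  (s : R) (Hs : In s D /\ succ D s > m + s)
  (Hsmin : forall r, In r D -> succ D r > m + r -> s <= r) :
  succ D s > 2 * s.
Proof.
  destruct Hs as [HsD Hts].
  set (t := succ D s) in *.
  apply Rnot_le_gt; intro Ht2.
  assert (Hspos : 0 <= s) by (apply Hnn; auto).
  destruct (succ_spec D s) as [[E _]|[Hst [HtD Htmin]]]; [fold t in E; lra|].
  fold t in Hst, HtD, Htmin.
  destruct (max_below D (t - s) m Hm ltac:(lra)) as [x0 [Hx0 [Hx0c Hx0m]]].
  assert (Hmx : m <= x0) by (apply Hx0m; auto; lra).
  destruct (succ_in D x0 s HsD ltac:(lra)) as [Hc1 [HcD Hcmin]].
  set (c0 := succ D x0) in *.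
  assert (Hcs : c0 <= s) by (apply Hcmin; auto; lra).
  assert (Hcl : t - s <= c0).
  { destruct (Rle_dec (t - s) c0); auto. specialize (Hx0m c0 HcD ltac:(lra)); lra. }
  assert (Hcu : c0 <= m + x0).
  { destruct (Rle_dec c0 (m + x0)); auto. specialize (Hsmin x0 Hx0 ltac:(fold c0; lra)); lra. }
  destruct HU as [X [d [[Hd0 [Hsym Htri]] [_ [[HdD _] [Hhom Hemb]]]]]].
  destruct (Hemb 3%nat (tri c0 s t)) as [f1 Hf1].
  { apply tri_fm; auto; lra. }
  destruct (Hemb 3%nat (tri c0 x0 x0)) as [f2 Hf2].
  { apply tri_fm; auto; lra. }
  destruct (Hhom (f2 0%nat :: f2 1%nat :: nil) (f1 0%nat :: f1 1%nat :: nil) (f1 0%nat))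
    as [g [Hg [_ Hgi]]].
  { reflexivity. }
  { intros i j Hi Hj. simpl in Hi, Hj.
    destruct i as [|[|i]]; try lia; destruct j as [|[|j]]; try lia; simpl;
      rewrite ?Hf1, ?Hf2 by lia; reflexivity. }
  pose proof (Hgi 0%nat ltac:(simpl; lia)) as G0; simpl in G0.
  pose proof (Hgi 1%nat ltac:(simpl; lia)) as G1; simpl in G1.
  set (b := g (f2 2%nat)).
  assert (Hab : d (f1 0%nat) b = x0).
  { unfold b; rewrite <- G0, Hg, Hf2 by lia; reflexivity. }
  assert (Hcb : d b (f1 1%nat) = x0).
  { unfold b; rewrite <- G1, Hg, Hf2 by lia; reflexivity. }
  assert (Hae : d (f1 0%nat) (f1 2%nat) = t) by (rewrite Hf1 by lia; reflexivity).
  assert (Hce : d (f1 1%nat) (f1 2%nat) = s) by (rewrite Hf1 by lia; reflexivity).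
  pose proof (Htri (f1 0%nat) b (f1 2%nat)) as T1.
  pose proof (Htri b (f1 1%nat) (f1 2%nat)) as T2.
  pose proof (HdD b (f1 2%nat)) as Hbe.
  set (z := d b (f1 2%nat)) in *.
  assert (s < z) by lra.
  assert (z < t) by lra.
  specialize (Htmin z Hbe ltac:(lra)). lra.
Qed.
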